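(* Let $G$ be a group, $n\ge2$, $X=\{x_1,\dots,x_n\}$, fix a function $X\to G$, and let $(\mathcal X_l)_{l\ge1}$ be a non-backtracking random walk on $(G,X)$. If the Markov chain $(\mathcal X_l)$ on $\Omega$ is irreducible, then its period is either $1$ or $2$.
   Context: Let $G$ be a group, $X=\{x_1,\dots,x_n\}$ a set with $n\ge 2$, and fix a function $X\to G$; we identify each $x_i$ with its image in $G$. Let $\Omega=G\times\{\pm1,\pm2,\dots,\pm n\}$, with elements written $(g,\epsilon i)$, $g\in G$, $\epsilon=\pm1$, $i\in\{1,\dots,n\}$. A non-backtracking random walk on $(G,X)$ is a Markov chain $(\mathcal X_l)_{l\ge1}$ on $\Omega$ with transition probabilities $\mathbb P(\mathcal X_{l+1}=(g,\epsilon i)\mid \mathcal X_l=(h,\epsilon' j))=\alpha_{\epsilon' j,\epsilon i}$ if $g=hx_i^{\epsilon}$ and $\epsilon i\neq -\epsilon' j$, and $=0$ otherwise, where the $\alpha_{\epsilon' j,\epsilon i}$ are positive constants with $\sum_{\epsilon i\neq-\epsilon' j}\alpha_{\epsilon' j,\epsilon i}=1$ for each $\epsilon' j$; and with initial distribution $\mathbb P(\mathcal X_1=(g,\epsilon i))=\beta_{\epsilon i}$ if $g=x_i^{\epsilon}$ and $0$ otherwise, for positive constants $\beta_{\epsilon i}$ summing to $1$. Irreducibility and period refer to the Markov chain on the full state space $\Omega$. *)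

(* Defs.v *)
From HB Require Import structures.
From mathcomp Require Import all_boot all_order all_algebra.
From Stdlib Require Import ClassicalDescription.
Set Implicit Arguments. Unset Strict Implicit. Unset Printing Implicit Defensive.
Import Order.TTheory GRing.Theory Num.Theory.
Local Open Scope ring_scope.

(* A letter eps*i in {+-1,...,+-n}: (i, b) with i : 'I_n (i.e. index i+1)
   and b = true for eps = +1, b = false for eps = -1. *)
Definition letter (n : nat) := ('I_n * bool)%type.

Definition opp_letter n (t : letter n) : letter n := (t.1, ~~ t.2).

Section NBRW.
Variables (R : realFieldType) (G : Type) (mul : G -> G -> G) (inv : G -> G).
Variables (n : nat) (x : 'I_n -> G) (alpha : letter n -> letter n -> R).

Definition gen (s : letter n) : G := if s.2 then x s.1 else inv (x s.1).

Definition state := (G * letter n)%type.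

Definition delta (T : Type) (a b : T) : R :=
  if excluded_middle_informative (a = b) then 1 else 0.

Definition P (w w' : state) : R :=
  if excluded_middle_informative
       (w'.2 != opp_letter w.2 /\ w'.1 = mul w.1 (gen w'.2))
  then alpha w.2 w'.2 else 0.

Definition succ (w : state) (s : letter n) : state := (mul w.1 (gen s), s).

(* l-step transition probabilities P^l(w, w'); since P(w, .) vanishes outside
   the finite set {succ w s | s letter}, the Chapman-Kolmogorov sum is finite *)
Fixpoint Pn (l : nat) (w w' : state) : R :=
  match l with
  | 0 => delta w w'
  | l'.+1 => \sum_(s : letter n) P w (succ w s) * Pn l' (succ w s) w'
  end.

Definition irreducible : Prop :=
  forall w w' : state, exists l : nat, 0 < Pn l w w'.

Definition is_period (w : state) (d : nat) : Prop :=
  (forall l : nat, (0 < l)%N -> 0 < Pn l w w -> (d %| l)%N) /\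
  (forall e : nat, (forall l : nat, (0 < l)%N -> 0 < Pn l w w -> (e %| l)%N) ->
     (e %| d)%N).
End NBRW.

(* Main.v *)
Require Import Defs.
From HB Require Import structures.
From mathcomp Require Import all_boot all_order all_algebra.
From Stdlib Require Import Classical ClassicalDescription.
Import Order.TTheory GRing.Theory Num.Theory.
Local Open Scope ring_scope.

Fixpoint reachF (G : Type) (mul : G -> G -> G) (inv : G -> G) (n : nat)
  (x : 'I_n -> G) (l : nat) (u v : state G n) {struct l} : Prop :=
  match l with
  | 0 => u = v
  | l'.+1 => exists s, s != opp_letter u.2 /\ reachF G mul inv n x l' (succ mul inv x u s) v
  end.
Arguments reachF : clear implicits.
Set Implicit Arguments.

Lemma P_ge0 (R : realFieldType) (G : Type) (mul : G -> G -> G) (inv : G -> G)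
  (n : nat) (x : 'I_n -> G) (alpha : letter n -> letter n -> R)
  (alpha_pos : forall t s : letter n, s != opp_letter t -> 0 < alpha t s) u v :
  0 <= P mul inv x alpha u v.
Proof.
rewrite /P; destruct excluded_middle_informative as [H|H] => //=.
case: H => H _; exact/ltW/alpha_pos.
Qed.

Lemma Pn_ge0 (R : realFieldType) (G : Type) (mul : G -> G -> G) (inv : G -> G)
  (n : nat) (x : 'I_n -> G) (alpha : letter n -> letter n -> R)
  (alpha_pos : forall t s : letter n, s != opp_letter t -> 0 < alpha t s) l :
  forall u v, 0 <= Pn mul inv x alpha l u v.
Proof.
elim: l => [|l IH] u v /=.
  by rewrite /delta; destruct excluded_middle_informative.
apply: sumr_ge0 => s _; apply: mulr_ge0; [exact: P_ge0 | exact: IH].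
Qed.

Lemma reach_Pn (R : realFieldType) (G : Type) (mul : G -> G -> G) (inv : G -> G)
  (n : nat) (x : 'I_n -> G) (alpha : letter n -> letter n -> R)
  (alpha_pos : forall t s : letter n, s != opp_letter t -> 0 < alpha t s) l :
  forall u v, reachF G mul inv n x l u v <-> 0 < Pn mul inv x alpha l u v.
Proof.
elim: l => [|l IH] u v /=.
  rewrite /delta; destruct excluded_middle_informative as [H|H] => /=; first by split=> // _; rewrite ltr01.
  by split=> //; rewrite ltxx.
split.
  move=> [s [Hs Hr]].
  rewrite (bigD1 s) //=; apply: ltr_wpDr.
    apply: sumr_ge0 => t _; apply: mulr_ge0; [exact: P_ge0 | exact: Pn_ge0].
  apply: mulr_gt0; last exact/IH.
  rewrite /P; destruct excluded_middle_informative as [H|HH] => /=.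
    exact: alpha_pos.
  by exfalso; apply: HH; split.
move=> Hpos.
case: (boolP [exists s, 0 < P mul inv x alpha u (succ mul inv x u s) *
                        Pn mul inv x alpha l (succ mul inv x u s) v]).
  move=> /existsP[s Hs]; exists s.
  move: Hs; rewrite /P; destruct excluded_middle_informative as [H|H] => /=.
    by case: H => Hs _; rewrite pmulr_rgt0 ?alpha_pos // => /IH.
  by rewrite mul0r ltxx.
move=> /existsPn H; exfalso.
have : \sum_s P mul inv x alpha u (succ mul inv x u s) *
         Pn mul inv x alpha l (succ mul inv x u s) v <= 0.
  apply: sumr_le0 => s _.
  by have := H s; rewrite -leNgt.
by rewrite leNgt Hpos.
Qed.

Lemma reach_cat (G : Type) (mul : G -> G -> G) (inv : G -> G) (n : nat)
  (x : 'I_n -> G) l m : forall u z v,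
  reachF G mul inv n x l u z -> reachF G mul inv n x m z v -> reachF G mul inv n x (l + m) u v.
Proof.
elim: l => [|l IH] u z v /=; first by move=> ->.
move=> [s [Hs Hr]] Hm; exists s; split => //; exact: IH Hr Hm.
Qed.

Lemma reach1 (G : Type) (mul : G -> G -> G) (inv : G -> G) (n : nat)
  (x : 'I_n -> G) u s : s != opp_letter u.2 -> reachF G mul inv n x 1 u (succ mul inv x u s).
Proof. by move=> Hs; exists s. Qed.
Arguments reach_cat {G mul inv n x l m u z v}.
Arguments reach1 {G mul inv n x u s}.
From mathcomp Require Import zify.
Theorem mainTheorem2
  (R : realFieldType)
  (G : Type) (mul : G -> G -> G) (one : G) (inv : G -> G)
  (mulA : forall a b c, mul a (mul b c) = mul (mul a b) c)
  (mul1g : forall a, mul one a = a) (mulg1 : forall a, mul a one = a)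
  (mulVg : forall a, mul (inv a) a = one) (mulgV : forall a, mul a (inv a) = one)
  (n : nat) (hn : (2 <= n)%N) (x : 'I_n -> G)
  (alpha : letter n -> letter n -> R)
  (alpha_pos : forall t s : letter n, s != opp_letter t -> 0 < alpha t s)
  (alpha_sum : forall t : letter n,
      \sum_(s : letter n | s != opp_letter t) alpha t s = 1)
  (beta : letter n -> R)
  (beta_pos : forall s : letter n, 0 < beta s)
  (beta_sum : \sum_(s : letter n) beta s = 1)
  (Hirr : irreducible mul inv x alpha) :
  forall w : state G n,
    is_period mul inv x alpha w 1 \/ is_period mul inv x alpha w 2.
Proof.
move=> w.
pose reach := reachF G mul inv n x.
have RP := @reach_Pn R G mul inv n x alpha alpha_pos.
have Hir : forall u v, exists l, reach l u v.
  by move=> u v; have [l Hl] := Hirr u v; exists l; apply/RP.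
have key : forall e : nat, (forall l : nat, (0 < l)%N -> 0 < Pn mul inv x alpha l w w -> (e %| l)%N) ->
    (e %| 2)%N.
  move=> e He.
  have Hret : forall l, reach l w w -> (e %| l)%N.
    case=> [|l] Hl; first by rewrite dvdn0.
    by apply: He => //; apply/RP.
  have Hc : forall l1 l2 v, reach l1 w v -> reach l2 w v -> (l1 = l2 %[mod e])%N.
    move=> l1 l2 v H1 H2.
    have [rho Hrho] := Hir v w.
    move: (Hret _ (reach_cat H1 Hrho)) (Hret _ (reach_cat H2 Hrho)).
    rewrite /dvdn => /eqP h1 /eqP h2.
    by apply/eqP; rewrite -(eqn_modDr rho) h1 h2.
  have i0lt : (0 < n)%N by apply: (@leq_trans 2).
  pose i0 : 'I_n := Ordinal i0lt.
  pose i1 : 'I_n := Ordinal hn.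
  have i01 : i0 != i1 by [].
  have neq : forall (i j : 'I_n) (p q : bool), i != j -> (i, p) != (j, q).
    by move=> i j p q Hij; apply/eqP => -[] Heq _; move: Hij; rewrite Heq eqxx.
  pose a : letter n := (i0, true).
  pose a' : letter n := (i0, false).
  pose b : letter n := (i1, true).
  case: w He Hret Hc => g s He Hret Hc.
  pose C : state G n := (g, b).
  have [lC HC] := Hir (g, s) C.
  pose A := succ mul inv x C a'.
  pose B : state G n := (A.1, b).
  have [lB HB] := Hir (g, s) B.
  pose Y := succ mul inv x A a'.
  have c1 : (lC + (1 + 1) = lB + 1 %[mod e])%N.
    apply: (Hc _ _ Y).
      apply: (reach_cat HC); apply: (@reach_cat _ _ _ _ _ 1 1 C A).
        by apply: reach1; exact: neq.
      by apply: reach1.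
    apply: (reach_cat HB).
    have H : reach 1 B (succ mul inv x B a') by apply: reach1; exact: neq.
    exact: H.
  have hR : succ mul inv x B a = (g, a).
    by rewrite /succ /= -mulA mulVg mulg1.
  pose Z0 := succ mul inv x (g, a) a.
  have c2 : (lB + (1 + 1) = lC + 1 %[mod e])%N.
    apply: (Hc _ _ Z0).
      apply: (reach_cat HB); apply: (@reach_cat _ _ _ _ _ 1 1 B (g, a)).
        by rewrite -hR; apply: reach1; exact: neq.
      by apply: reach1.
    apply: (reach_cat HC).
    have H : reach 1 C (succ mul inv x C a) by apply: reach1; exact: neq.
    exact: H.
  pose c : letter n := if a != opp_letter s then a else a'.
  have hc1 : c != opp_letter s.
    rewrite /c; case: ifP => // /negbFE/eqP <-.
    by apply/eqP => -[].
  pose Zc := succ mul inv x (g, s) c.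
  have c3 : (lC + 1 = 0 + 1 %[mod e])%N.
    apply: (Hc _ _ Zc).
      apply: (reach_cat HC).
      have H : reach 1 C (succ mul inv x C c).
        apply: reach1; rewrite /c /=; case: ifP => _; rewrite xpair_eqE negb_and i01 //.
      exact: H.
    apply: (@reach_cat _ _ _ _ _ 0 1 (g, s) (g, s)) => //.
    exact: reach1.
  have : (2 + (lC + lB + 2) = 0 + (lC + lB + 2) %[mod e])%N.
    have E1 : (2 + (lC + lB + 2) = (lC + (1 + 1)) + (lB + (1 + 1)))%N by lia.
    have E2 : (0 + (lC + lB + 2) = (lB + 1) + (lC + 1))%N by lia.
    by rewrite E1 E2 -modnDm c1 c2 modnDm.
  move/eqP; rewrite eqn_modDr mod0n => /eqP h.
  by rewrite /dvdn h.
have [[l [Hl [Hp Ho]]]|Hev] :=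
  classic (exists l, (0 < l)%N /\ 0 < Pn mul inv x alpha l w w /\ odd l).
  left; split; first by move=> l' _ _; exact: dvd1n.
  move=> e He; have H2 := key e He; have Hel := He l Hl Hp.
  case: e H2 Hel He => [|[|[|e]]] //.
    by move=> _; rewrite dvdn2 Ho.
right; split; last exact: key.
move=> l Hl Hp; rewrite dvdn2; apply/negP => Ho; apply: Hev; exists l; split=> //.
Qed.
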